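(* The set $\mathtt{SUR}$ of surjective cellular automata is closed in $(\mathtt{CA},\delta)$: for every non-surjective $c\in\mathtt{CA}$ there is $\epsilon>0$ such that $\delta(c,d)\ge\epsilon$ for all $d\in\mathtt{SUR}$.
   Context: $\Sigma$ is a finite alphabet with $|\Sigma|\ge2$, $N(r)=[-r,r]$. A cellular automaton (CA) is a map $c:\Sigma^\mathbb{Z}\to\Sigma^\mathbb{Z}$ of the form $c(x)_i=F(x_{[i-r,i+r]})$ for a local function $F:\Sigma^{N(r)}\to\Sigma$. $\mathtt{CA}$ is the set of all CA, $\mathtt{SUR}$ the surjective ones. For $c,d\in\mathtt{CA}$ with common radius $r$, $D^c_d$ is the set of $w\in\Sigma^{N(r)}$ on which the local rules of $c$ and $d$ give different outputs, and $\delta(c,d)=|D^c_d|/|\Sigma|^{2r+1}$ (independent of $r$). *)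

(* Defs.v *)
From HB Require Import structures.
From mathcomp Require Import all_boot all_order all_algebra.
Unset Printing Implicit Defensive.
Import Order.TTheory GRing.Theory Num.Theory.

Definition config (S : finType) := int -> S.

Definition window (S : finType) (x : config S) (r : nat) (i : int)
  : {ffun 'I_(2 * r + 1) -> S} :=
  [ffun k : 'I_(2 * r + 1) => x (i - (r%:Z) + (nat_of_ord k)%:Z)%R].

Definition local_rule_of (S : finType) (c : config S -> config S) (r : nat)
  (F : {ffun 'I_(2 * r + 1) -> S} -> S) : Prop :=
  forall (x : config S) (i : int), c x i = F (window S x r i).

Definition is_CA (S : finType) (c : config S -> config S) : Prop :=
  exists (r : nat) (F : {ffun 'I_(2 * r + 1) -> S} -> S), local_rule_of S c r F.

Definition is_surjective (S : finType) (c : config S -> config S) : Prop :=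
  forall y : config S, exists x : config S, c x = y.

Definition disagreement (S : finType) (r : nat)
  (F G : {ffun 'I_(2 * r + 1) -> S} -> S) : {set {ffun 'I_(2 * r + 1) -> S}} :=
  [set w | F w != G w].

Definition delta_r (S : finType) (r : nat)
  (F G : {ffun 'I_(2 * r + 1) -> S} -> S) : rat :=
  ((#|disagreement S r F G|)%:R / (#|S| ^ (2 * r + 1))%:R)%R.

(* Main.v *)
Require Import Defs.
From HB Require Import structures.
From mathcomp Require Import all_boot all_order all_algebra.
From mathcomp Require Import zify ring.
From Stdlib Require Import Classical ClassicalEpsilon FunctionalExtensionality.
Import Order.TTheory GRing.Theory Num.Theory.
Set Implicit Arguments. Unset Strict Implicit.

Definition at_ (T : Type) (d : T) (L : nat) (w : {ffun 'I_L -> T}) (i : nat) : T :=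
  if insub i is Some o then w o else d.

Lemma at_ord T d L (w : {ffun 'I_L -> T}) (o : 'I_L) : at_ d w o = w o.
Proof. by rewrite /at_ valK. Qed.

Lemma at_ffun T d L (f : nat -> T) i : (i < L)%N ->
  at_ d [ffun o : 'I_L => f (nat_of_ord o)] i = f i.
Proof. by move=> H; rewrite /at_ insubT /= ffunE. Qed.

Lemma fin_bound (T : finType) (P : T -> nat -> Prop) :
  (forall t n n', (n <= n')%N -> P t n -> P t n') ->
  (forall t, exists n, P t n) -> exists N, forall t, P t N.
Proof.
move=> mono H.
suff [N HN]: exists N, forall t, t \in enum T -> P t N.
  by exists N => t; apply: HN; rewrite mem_enum.
elim: (enum T) => [|t s [N HN]]; first by exists 0%N.
have [n Hn] := H t; exists (maxn n N) => t'; rewrite inE => /orP [/eqP ->|Ht'].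
  by apply: mono Hn; apply: leq_maxl.
by apply: mono (HN _ Ht'); apply: leq_maxr.
Qed.

Section Compact.
Variable S : finType.
Variable s0 : S.
Variable c : config S -> config S.
Variable r0 : nat.
Variable F0 : {ffun 'I_(2 * r0 + 1) -> S} -> S.
Hypothesis hF0 : local_rule_of S c r0 F0.
Variable y : config S.

Definition close n (x : config S) := forall j : int, (absz j <= n)%N -> c x j = y j.
Definition agree m (z x : config S) := forall j : int, (absz j <= m)%N -> z j = x j.

Lemma shiftc (x : config S) (a j : int) : c (fun z => x (z + a)%R) j = c x (j + a)%R.
Proof.
rewrite !hF0; congr F0; apply/ffunP => k; rewrite !ffunE; congr x; ring.
Qed.

Lemma compact_step (A : config S -> Prop) (m : nat) :
  (forall n, exists x, A x /\ close n x) ->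
  exists z, forall n, exists x, A x /\ agree m z x /\ close n x.
Proof.
move=> H; apply: NNPP => Hn.
pose cfg (p : {ffun 'I_(2 * m).+1 -> S}) : config S := fun j => at_ s0 p (absz (j + m%:Z)%R).
pose P p n := forall x, A x -> agree m (cfg p) x -> ~ close n x.
have [N HN] : exists N, forall p, P p N.
  apply: fin_bound.
    move=> p n n' le Hp x Ax ag cl; apply: (Hp x Ax ag) => j Hj; apply: cl; lia.
  move=> p; apply: NNPP => Hp; apply: Hn; exists (cfg p) => n; apply: NNPP => Hx.
  apply: Hp; exists n => x Ax ag cl; apply: Hx; by exists x.
have [x [Ax cl]] := H N.
pose p := [ffun k : 'I_(2 * m).+1 => x ((nat_of_ord k)%:Z - m%:Z)%R].
apply: (HN p x Ax _ cl) => j Hj; rewrite /cfg /p.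
have Hl : (absz (j + m%:Z)%R < (2 * m).+1)%N by lia.
rewrite (at_ffun _ (fun k => x ((k%:Z) - m%:Z)%R) Hl); congr x; lia.
Qed.

Definition Good m z := forall n, exists x, agree m z x /\ close n x.

Lemma compact : (forall n, exists x, close n x) -> exists x, c x = y.
Proof.
move=> H.
have [z0 Hz0] : exists z, Good 0 z.
  have [z Hz] := @compact_step (fun _ => True) 0 (fun n => let: ex_intro x h := H n in ex_intro _ x (conj I h)).
  by exists z => n; have [x [_ h]] := Hz n; exists x.
have Hstep : forall m z, exists z', Good m z -> Good m.+1 z' /\ agree m z z'.
  move=> m z; case: (classic (Good m z)) => [G|NG]; last by exists z.
  have [z' Hz'] := @compact_step (agree m z) m.+1 G.
  exists z' => _; split.
    by move=> n; have [x [_ [h1 h2]]] := Hz' n; exists x.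
  have [x [h0 [h1 _]]] := Hz' 0%N.
  move=> j Hj; rewrite (h0 j Hj) (h1 j) //; lia.
pose next m z := proj1_sig (constructive_indefinite_description _ (Hstep m z)).
have Hnext m z : Good m z -> Good m.+1 (next m z) /\ agree m z (next m z).
  by rewrite /next; case: constructive_indefinite_description.
pose zs := fix f (m : nat) : config S := if m is m'.+1 then next m' (f m') else z0.
have Gz m : Good m (zs m).
  by elim: m => [|m IH] //=; have [] := Hnext m _ IH.
have Az m m' : (m <= m')%N -> agree m (zs m) (zs m').
  move=> le; elim: m' le => [|m' IH]; first by rewrite leqn0 => /eqP ->.
  rewrite leq_eqVlt => /orP [/eqP -> //|]; rewrite ltnS => le j Hj.
  rewrite (IH le j Hj) /=; have [_ ag] := Hnext m' _ (Gz m').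
  apply: ag; lia.
pose x j := zs (absz j) j.
have Hx M j : (absz j <= M)%N -> x j = zs M j.
  by move=> Hj; rewrite /x; apply: Az.
exists x; apply: functional_extensionality => j.
have [x' [ag cl]] := Gz (absz j + r0)%N (absz j).
rewrite -(cl j (leqnn _)) !hF0; congr F0; apply/ffunP => k; rewrite !ffunE.
have Hk := ltn_ord k.
rewrite (Hx (absz j + r0)%N); last by lia.
by apply: ag; lia.
Qed.

End Compact.

Lemma orphan (S : finType) (s0 : S) (c : config S -> config S) :
  is_CA S c -> ~ is_surjective S c ->
  exists n (u : {ffun 'I_n.+1 -> S}), forall x, exists k : 'I_n.+1, c x ((nat_of_ord k)%:Z)%R <> u k.
Proof.
move=> [r0 [F0 hF0]] hns; apply: NNPP => H; apply: hns => y.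
apply: (compact s0 hF0) => n.
pose u := [ffun k : 'I_(2 * n).+1 => y ((nat_of_ord k)%:Z - n%:Z)%R].
have [x' Hx'] : exists x', forall k : 'I_(2 * n).+1, c x' ((nat_of_ord k)%:Z)%R = u k.
  apply: NNPP => Hn; apply: H; exists (2 * n)%N, u => x; apply: NNPP => Hk; apply: Hn.
  by exists x => k; apply: NNPP => Hk'; apply: Hk; exists k.
exists (fun z => x' (z + n%:Z)%R) => j Hj; rewrite (shiftc hF0).
have Hl : (absz (j + n%:Z)%R < (2 * n).+1)%N by lia.
have E : ((j + n%:Z) = (absz (j + n%:Z)%R)%:Z)%R by lia.
rewrite {1}E (Hx' (Ordinal Hl)) ffunE /= -E.
congr y; ring.
Qed.

Lemma bern a k : (a ^ k.+1 + k.+1 * a ^ k <= (a + 1) ^ k.+1)%N.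
Proof.
elim: k => [|k IH]; first by rewrite expn1 expn0; lia.
rewrite (expnS (a + 1)) (expnS a k.+1) (expnS a k).
move: IH; rewrite (expnS a k); set P := a ^ k; set Q := (a + 1) ^ k.+1; nia.
Qed.

Lemma arith Q N : (forall k, Q ^ k <= N ^ k * Q)%N -> (Q <= N)%N.
Proof.
move=> H; rewrite leqNgt; apply/negP => lt.
case: Q H lt => [|a] H lt //.
have Nle : (N <= a)%N by [].
have pw k : (N ^ k <= a ^ k)%N by elim: k => [|k IH]; rewrite ?expn0 // !expnS leq_mul.
case: a Nle pw H lt => [|a] Nle pw H lt.
  by move: (H 1%N); rewrite expn1; move: Nle; rewrite leqn0 => /eqP ->.
have h1 := H (a.+1 ^ 2).+1.
have h2 := pw (a.+1 ^ 2).+1.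
have h3 := bern a.+1 (a.+1 ^ 2).
have h4 : (0 < a.+1 ^ (a.+1 ^ 2))%N by rewrite expn_gt0.
move: h1 h2 h3 h4; rewrite !expnS -addn1.
set P := a.+1 ^ (a.+1 ^ 2); set R := (a.+1 + 1) ^ (a.+1 ^ 2); set T := N ^ _.
nia.
Qed.

Section Balance.
Variable S : finType.
Variable s0 : S.
Variable r : nat.
Variable G : {ffun 'I_(2 * r + 1) -> S} -> S.

Definition win L (w : {ffun 'I_L -> S}) (t : nat) : {ffun 'I_(2 * r + 1) -> S} :=
  [ffun j : 'I_(2 * r + 1) => at_ s0 w (t + j)].
Definition Gimg L (w : {ffun 'I_(L + 2 * r) -> S}) : {ffun 'I_L -> S} :=
  [ffun t : 'I_L => G (win w t)].

Lemma at_ext (T : Type) (d : T) L (w1 w2 : {ffun 'I_L -> T}) :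
  (forall i, (i < L)%N -> at_ d w1 i = at_ d w2 i) -> w1 = w2.
Proof. by move=> H; apply/ffunP => o; rewrite -!(at_ord d) H. Qed.

Lemma Gimg_at L (w : {ffun 'I_(L + 2 * r) -> S}) t : (t < L)%N ->
  at_ s0 (Gimg w) t = G (win w t).
Proof. by move=> Ht; rewrite /Gimg (at_ffun _ (fun t => G (win w t))). Qed.

Variable d : config S -> config S.
Hypothesis hG : local_rule_of S d r G.
Hypothesis hd : is_surjective S d.

Lemma gsurj L (y : {ffun 'I_L -> S}) : exists w, Gimg w = y.
Proof.
have [x Hx] := hd (fun z => at_ s0 y (absz (z - r%:Z)%R)).
exists [ffun i : 'I_(L + 2 * r) => x ((nat_of_ord i)%:Z)%R].
apply: (@at_ext _ s0) => t Ht; rewrite Gimg_at //.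
have := f_equal (fun f => f ((t + r)%N%:Z)%R) Hx; rewrite hG /= => E.
have Ha : absz ((t + r)%N%:Z - r%:Z)%R = t by lia.
rewrite Ha in E; rewrite -E; congr G; apply/ffunP => j; rewrite !ffunE.
have Hj := ltn_ord j.
rewrite (at_ffun _ (fun i => x (i%:Z)%R)); last by lia.
congr x; lia.
Qed.

Lemma balance m (v : {ffun 'I_m.+1 -> S}) :
  (#|S| ^ (2 * r) <= #|[set w : {ffun 'I_(m.+1 + 2 * r) -> S} | Gimg w == v]|)%N.
Proof.
set s := (m.+1 + 2 * r)%N.
set PreV := [set w : {ffun 'I_s -> S} | Gimg w == v].
apply: arith => k.
have s_gt0 : (0 < s)%N by rewrite /s addSn.
pose yof (z : {ffun 'I_k -> {ffun 'I_(2 * r) -> S}}) : {ffun 'I_(k * s) -> S} :=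
  [ffun i : 'I_(k * s) => if (nat_of_ord i %% s < m.+1)%N then at_ s0 v (i %% s)
     else at_ s0 (at_ [ffun=> s0] z (i %/ s)) (i %% s - m.+1)].
have yofE z j t : (j < k)%N -> (t < s)%N -> at_ s0 (yof z) (j * s + t) =
    if (t < m.+1)%N then at_ s0 v t else at_ s0 (at_ [ffun=> s0] z j) (t - m.+1).
  move=> Hj Ht; rewrite /yof (at_ffun _ (fun i => if (i %% s < m.+1)%N then at_ s0 v (i %% s)
     else at_ s0 (at_ [ffun=> s0] z (i %/ s)) (i %% s - m.+1))); last by nia.
  by rewrite divnMDl // divn_small // addn0 modnMDl modn_small.
have yof_inj : injective yof.
  move=> z1 z2 E; apply: (@at_ext _ [ffun=> s0]) => j Hj; apply: (@at_ext _ s0) => t Ht.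
  have := f_equal (fun f => at_ s0 f (j * s + (m.+1 + t))) E => /=.
  have Hs : (m.+1 + t < s)%N by rewrite /s ltn_add2l.
  rewrite !yofE //.
  by rewrite ltnNge leq_addr /= addKn.
pose pre (y : {ffun 'I_(k * s) -> S}) : {ffun 'I_(k * s + 2 * r) -> S} :=
  odflt [ffun=> s0] [pick w | Gimg w == y].
have preE y : Gimg (pre y) = y.
  rewrite /pre; case: pickP => [w /eqP //|H].
  by have [w Hw] := gsurj y; move: (H w); rewrite Hw eqxx.
pose block (j : nat) (w : {ffun 'I_(k * s + 2 * r) -> S}) : {ffun 'I_s -> S} :=
  [ffun t : 'I_s => at_ s0 w (j * s + t)].
pose tail (w : {ffun 'I_(k * s + 2 * r) -> S}) : {ffun 'I_(2 * r) -> S} :=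
  [ffun t : 'I_(2 * r) => at_ s0 w (k * s + t)].
pose h w := ([ffun j : 'I_k => block j w], tail w).
have h_inj : injective h.
  move=> w1 w2 [E1 E2]; apply: (@at_ext _ s0) => i Hi.
  case: (ltnP i (k * s)) => Hik.
    have Hj : (i %/ s < k)%N by rewrite ltn_divLR.
    have Ht : (i %% s < s)%N by rewrite ltn_pmod.
    have := f_equal (fun f => at_ s0 (at_ [ffun=> s0] f (i %/ s)) (i %% s)) E1 => /=.
    rewrite !(at_ffun _ (fun j => block j _)) //.
    rewrite /block !(at_ffun _ (fun t => at_ s0 _ (i %/ s * s + t))) //.
    by rewrite -divn_eq.
  have Ht : (i - k * s < 2 * r)%N by lia.
  have := f_equal (fun f => at_ s0 f (i - k * s)) E2 => /=.
  rewrite /tail !(at_ffun _ (fun t => at_ s0 _ (k * s + t))) //.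
  by rewrite subnKC.
pose g z := h (pre (yof z)).
have g_inj : injective g.
  move=> z1 z2 /h_inj E; apply: yof_inj.
  by rewrite -(preE (yof z1)) -(preE (yof z2)) E.
pose Target := setX [set f : {ffun 'I_k -> {ffun 'I_s -> S}} | f \in ffun_on (mem PreV)]
                    [set: {ffun 'I_(2 * r) -> S}].
have sub : [set g z | z in [set: {ffun 'I_k -> {ffun 'I_(2 * r) -> S}}]] \subset Target.
  apply/subsetP => p /imsetP [z _ ->]; rewrite !inE andbT.
  apply/ffun_onP => j; rewrite ffunE inE; apply/eqP.
  apply: (@at_ext _ s0) => t Ht; rewrite Gimg_at //.
  have Hj := ltn_ord j.
  have Hs : (t < s)%N by rewrite /s; lia.
  have := f_equal (fun f => at_ s0 f (j * s + t)) (preE (yof z)).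
  rewrite yofE // Ht Gimg_at; last by nia.
  move=> <-; congr G; apply/ffunP => i; rewrite !ffunE.
  have Hi := ltn_ord i.
  rewrite /block (at_ffun _ (fun t => at_ s0 _ (j * s + t))); last by rewrite /s; lia.
  by rewrite addnA.
have := subset_leq_card sub.
rewrite card_imset // cardsT card_ffun card_ffun !card_ord.
rewrite cardsX cardsT card_ffun card_ord cardsE card_ffun_on card_ord.
by rewrite expnM mulnC.
Qed.

End Balance.

Theorem theorem4p2 (S : finType) (hS : 1 < #|S|)
  (c : config S -> config S) (hc : is_CA S c) (hns : ~ is_surjective S c) :
  exists eps : rat, (0 < eps)%R /\
    forall d : config S -> config S, is_CA S d -> is_surjective S d ->
      forall (r : nat) (F G : {ffun 'I_(2 * r + 1) -> S} -> S),
        local_rule_of S c r F -> local_rule_of S d r G ->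
        (eps <= delta_r S r F G)%R.
Proof.
have /card_gt0P [s0 _] : (0 < #|S|)%N by lia.
have [n [u Hu]] := orphan s0 hc hns.
set q := #|S|.
exists ((n.+1 * q ^ n.+1)%N%:R^-1)%R; split.
  by rewrite invr_gt0 ltr0n muln_gt0 expn_gt0 /q; apply/andP; split => //; lia.
move=> d _ hd r F G hF hG.
set D := disagreement S r F G.
set P := [set w : {ffun 'I_(n.+1 + 2 * r) -> S} | Gimg s0 G w == u].
have Hbal : (q ^ (2 * r) <= #|P|)%N by apply: (balance s0 hG hd u).
pose kw (w : {ffun 'I_(n.+1 + 2 * r) -> S}) : 'I_n.+1 :=
  odflt ord0 [pick k : 'I_n.+1 | F (win s0 r w k) != G (win s0 r w k)].
pose rest (k : nat) (w : {ffun 'I_(n.+1 + 2 * r) -> S}) : {ffun 'I_n -> S} :=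
  [ffun i : 'I_n => at_ s0 w (if (nat_of_ord i < k)%N then nat_of_ord i else (i + (2 * r + 1))%N)].
pose phi w := (kw w, win s0 r w (kw w), rest (kw w) w).
have phi_inj : injective phi.
  move=> w1 w2 [E1 E2 E3].
  move: E2 E3; rewrite -E1; set k := kw w1 => E2 E3.
  have Hk := ltn_ord k.
  apply: (@at_ext _ s0) => i Hi.
  case: (ltnP i k) => H1.
    have Hin : (i < n)%N by lia.
    have := f_equal (fun f => at_ s0 f i) E3 => /=.
    rewrite /rest !(at_ffun _ (fun i => at_ s0 _ (if (i < k)%N then i else (i + (2 * r + 1))%N))) //.
    by rewrite H1.
  case: (ltnP i (k + (2 * r + 1))) => H2.
    have := f_equal (fun f => at_ s0 f (i - k)) E2 => /=.
    have Hin : (i - k < 2 * r + 1)%N by lia.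
    rewrite /win !(at_ffun _ (fun j => at_ s0 _ (k + j))) //.
    by rewrite subnKC.
  have := f_equal (fun f => at_ s0 f (i - (2 * r + 1))) E3 => /=.
  have Hin : (i - (2 * r + 1) < n)%N by lia.
  rewrite /rest !(at_ffun _ (fun i => at_ s0 _ (if (i < k)%N then i else (i + (2 * r + 1))%N))) //.
  have -> : (i - (2 * r + 1) < k)%N = false by lia.
  by rewrite subnK //; lia.
have sub : phi @: P \subset setX (setX [set: 'I_n.+1] D) [set: {ffun 'I_n -> S}].
  apply/subsetP => p /imsetP [w]; rewrite inE => /eqP Hw ->.
  rewrite !inE /= andbT.
  rewrite /kw; case: pickP => [k //|Hnone].
  exfalso.
  pose x : config S := fun z => at_ s0 w (absz (z + r%:Z)%R).
  have [k Hk] := Hu x; apply: Hk.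
  have := Hnone k; rewrite /= => /negbFE /eqP E.
  rewrite hF.
  have -> : window S x r (nat_of_ord k) = win s0 r w k.
    apply/ffunP => j; rewrite !ffunE /x; congr at_; lia.
  rewrite E -(at_ord s0 u k) -Hw Gimg_at //.
have := subset_leq_card sub.
rewrite card_imset // cardsX cardsX !cardsT card_ord card_ffun card_ord => Hc.
have Hn : (q ^ (2 * r + 1) <= n.+1 * q ^ n.+1 * #|D|)%N.
  have e1 : (q ^ (2 * r + 1) = q ^ (2 * r) * q)%N by rewrite expnD expn1.
  have e2 : (q ^ n.+1 = q ^ n * q)%N by rewrite expnSr.
  have := leq_trans Hbal Hc; rewrite e1 e2 -/q.
  set A := q ^ (2 * r); set B := q ^ n; set C := #|D|; nia.
rewrite /delta_r -/D -/q ler_pdivlMr; last by rewrite ltr0n expn_gt0 /q; lia.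
rewrite mulrC ler_pdivrMr; last by rewrite ltr0n muln_gt0 expn_gt0 /q; apply/andP; split => //; lia.
rewrite -natrM ler_nat; apply: leq_trans Hn _; by rewrite [X in (_ <= X)%N]mulnC.
Qed.
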